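(* Let $\Gamma$ be a gain operator on $\ell^\infty_+(\mathcal I)$. The following are equivalent: (a) the set $\Psi(\Gamma)$ is cofinal; (b) for every $b\in\ell^\infty_+(\mathcal I)$, every trajectory of $\Sigma(\Gamma^{\oplus}_b)$ is norm-bounded, where $\Gamma^\oplus_b(s):=b\oplus\Gamma(s)$; (c) every trajectory of $\Sigma(\hat\Gamma)$ is norm-bounded, where $\hat\Gamma(s):=s\oplus\Gamma(s)$; (d) for every $s\ge0$ there exist $\hat s\ge0$ and $n\in\mathbb N$ with $s\le\Gamma^l(\hat s)$ for $0\le l<n$ and $\Gamma^n(\hat s)\le\hat s$.
   Context: Let $\mathcal I$ be a nonempty countable index set; $\ell^\infty_+(\mathcal I)$ is the cone of nonnegative real families $s=(s_i)_{i\in\mathcal I}$ with $\|s\|:=\sup_i|s_i|<\infty$, ordered componentwise; $\oplus$ is the componentwise maximum. $\mathcal K_\infty$: continuous strictly increasing unbounded $\gamma:\mathbb R_+\to\mathbb R_+$ with $\gamma(0)=0$. For $\mathcal J\subset\mathcal I$, $s_{|\mathcal J}$ agrees with $s$ on $\mathcal J$ and is $0$ elsewhere. Gain operator: for each $i$ a finite (possibly empty) $\mathcal I_i\subset\mathcal I\setminus\{i\}$; directed graph $\mathcal G$ with vertices $\mathcal I$ and edges $ji$, $j\in\mathcal I_i$; a pointwise equicontinuous family $\gamma_{ij}\in\mathcal K_\infty$ ($ji\in E(\mathcal G)$); functions $\mu_i:\ell^\infty_+(\mathcal I)\to[0,\infty]$ with (M1) some $\xi\in\mathcal K_\infty$ has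 $\mu_i(0)=0$, $\mu_i(s)\ge\xi(\|s\|)$; (M2) $\mu_i$ monotone; (M3) for each finite $\mathcal J$, $\mu_i$ restricted to vectors vanishing off $\mathcal J$ is finite-valued and continuous; (M4) for each norm-bounded $A$ and $\varepsilon>0$ there is $\delta>0$ with $\sup_i|\mu_i(s_{|\mathcal I_i})-\mu_i(s^0_{|\mathcal I_i})|\le\varepsilon$ whenever $s^0\in A$, $\|s-s^0\|\le\delta$. $\Gamma_i(s):=\mu_i([\gamma_{ij}(s_j)]_{j\in\mathcal I_i})$ (argument zero outside $\mathcal I_i$). For monotone $T$: $\Psi(T):=\{s:T(s)\le s\}$; $\Sigma(T)$ is the system $s^{n+1}=T(s^n)$, whose trajectories are $(T^n(s))_{n\ge0}$. A set $A$ is cofinal if every $s\in\ell^\infty_+(\mathcal I)$ has some $\hat s\in A$ with $s\le\hat s$. *)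

(* Defs.v *)
From Stdlib Require Import Reals List Classical ClassicalDescription.
From Coquelicot Require Import Coquelicot.
Open Scope R_scope.

(* K_infinity functions on R_+ (only values on [0,oo) matter). *)
Definition Kinf (g : R -> R) : Prop :=
  g 0 = 0 /\
  (forall x y, 0 <= x -> x < y -> g x < g y) /\
  (forall x, 0 <= x -> forall eps, 0 < eps -> exists d, 0 < d /\
     forall y, 0 <= y -> Rabs (y - x) < d -> Rabs (g y - g x) < eps) /\
  (forall M, exists x, 0 <= x /\ M < g x).

Definition norm_le {I : Type} (s : I -> R) (M : R) : Prop :=
  forall i, Rabs (s i) <= M.

Definition linfp {I : Type} (s : I -> R) : Prop :=
  (forall i, 0 <= s i) /\ exists M, norm_le s M.

(* the sup norm ||s|| = sup_i |s_i| (meaningful for bounded s) *)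
Definition sup_norm {I : Type} (s : I -> R) : R :=
  real (Lub_Rbar (fun x => exists i, x = Rabs (s i))).

Definition vle {I : Type} (s t : I -> R) : Prop := forall i, s i <= t i.
Definition vmax {I : Type} (s t : I -> R) : I -> R := fun i => Rmax (s i) (t i).

Definition restrict {I : Type} (J : I -> Prop) (s : I -> R) : I -> R :=
  fun j => if excluded_middle_informative (J j) then s j else 0.

Definition inI {I : Type} (Ii : I -> list I) (i : I) : I -> Prop :=
  fun j => In j (Ii i).

Definition gain_operator {I : Type} (Ii : I -> list I)
  (gam : I -> I -> R -> R) (mu : I -> (I -> R) -> Rbar) : Prop :=
  (forall i, ~ In i (Ii i)) /\
  (forall i j, In j (Ii i) -> Kinf (gam i j)) /\
  (forall r, 0 <= r -> forall eps, 0 < eps -> exists d, 0 < d /\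
     forall i j, In j (Ii i) -> forall r', 0 <= r' -> Rabs (r' - r) < d ->
       Rabs (gam i j r' - gam i j r) < eps) /\
  (forall i s, linfp s -> Rbar_le (Finite 0) (mu i s)) /\
  (exists xi, Kinf xi /\ forall i, mu i (fun _ => 0) = Finite 0 /\
     forall s, linfp s -> Rbar_le (Finite (xi (sup_norm s))) (mu i s)) /\
  (forall i s t, linfp s -> linfp t -> vle s t -> Rbar_le (mu i s) (mu i t)) /\
  (forall i (J : list I) s, linfp s -> (forall j, ~ In j J -> s j = 0) ->
     is_finite (mu i s) /\
     forall eps, 0 < eps -> exists d, 0 < d /\
       forall t, linfp t -> (forall j, ~ In j J -> t j = 0) ->
         norm_le (fun j => t j - s j) d ->
         Rabs (real (mu i t) - real (mu i s)) <= eps) /\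
  (forall A : (I -> R) -> Prop, (forall s, A s -> linfp s) ->
     (exists M, forall s, A s -> norm_le s M) ->
     forall eps, 0 < eps -> exists d, 0 < d /\
       forall s0 s, A s0 -> linfp s -> norm_le (fun j => s j - s0 j) d ->
         forall i, Rabs (real (mu i (restrict (inI Ii i) s))
                         - real (mu i (restrict (inI Ii i) s0))) <= eps).

(* Gamma_i(s) = mu_i([gamma_ij(s_j)]_{j in I_i}); finite-valued by (M3). *)
Definition Gamma {I : Type} (Ii : I -> list I)
  (gam : I -> I -> R -> R) (mu : I -> (I -> R) -> Rbar) (s : I -> R) : I -> R :=
  fun i => real (mu i (restrict (inI Ii i) (fun j => gam i j (s j)))).

Definition Psi {I : Type} (T : (I -> R) -> (I -> R)) (s : I -> R) : Prop :=
  linfp s /\ vle (T s) s.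

Definition cofinal {I : Type} (A : (I -> R) -> Prop) : Prop :=
  forall s, linfp s -> exists sh, A sh /\ vle s sh.

Definition all_traj_bounded {I : Type} (T : (I -> R) -> (I -> R)) : Prop :=
  forall s, linfp s -> exists M, forall n : nat, norm_le (Nat.iter n T s) M.

(* Main.v *)
Require Import Defs.
From Stdlib Require Import Reals List Lra Lia Classical ClassicalDescription FunctionalExtensionality IndefiniteDescription.
From Coquelicot Require Import Coquelicot.
Open Scope R_scope.

Section Aux.
Context {I : Type} (Ii : I -> list I) (gam : I -> I -> R -> R) (mu : I -> (I -> R) -> Rbar).
Hypothesis Hgain : gain_operator Ii gam mu.

Definition nonneg (x : I -> R) := forall i, 0 <= x i.
Definition vv (x : I -> R) i := restrict (inI Ii i) (fun j => gam i j (x j)).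

Lemma Kinf_nonneg g r : Kinf g -> 0 <= r -> 0 <= g r.
Proof.
  intros [H0 [Hm _]] Hr. destruct (Req_dec r 0) as [->|Hne]. lra.
  rewrite <- H0. left. apply Hm; lra.
Qed.

Lemma Kinf_mono g r r' : Kinf g -> 0 <= r -> r <= r' -> g r <= g r'.
Proof.
  intros [H0 [Hm _]] Hr Hrr. destruct (Req_dec r r') as [->|Hne]. lra.
  left. apply Hm; lra.
Qed.

Lemma fold_sum_nonneg (L : list I) (f : I -> R) :
  (forall j, In j L -> 0 <= f j) -> 0 <= fold_right (fun j acc => f j + acc) 0 L.
Proof.
  induction L as [|a L IH]; simpl; intros Hf. lra.
  assert (0 <= f a) by auto.
  assert (0 <= fold_right (fun j acc => f j + acc) 0 L) by auto. lra.
Qed.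

Lemma fold_sum_ge (L : list I) (f : I -> R) :
  (forall j, In j L -> 0 <= f j) ->
  forall j, In j L -> f j <= fold_right (fun j acc => f j + acc) 0 L.
Proof.
  induction L as [|a L IH]; simpl; intros Hf j Hj. contradiction.
  assert (0 <= fold_right (fun j acc => f j + acc) 0 L) by (apply fold_sum_nonneg; auto).
  destruct Hj as [->|Hj].
  - lra.
  - assert (0 <= f a) by auto.
    assert (f j <= fold_right (fun j acc => f j + acc) 0 L) by auto.
    lra.
Qed.

Lemma gam_nonneg i j r : In j (Ii i) -> 0 <= r -> 0 <= gam i j r.
Proof. intros. destruct Hgain as [_ [Hk _]]. apply Kinf_nonneg; auto. Qed.

Lemma gam_mono i j r r' : In j (Ii i) -> 0 <= r -> r <= r' -> gam i j r <= gam i j r'.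
Proof. intros. destruct Hgain as [_ [Hk _]]. apply Kinf_mono; auto. Qed.

Lemma vv_nonneg x i : nonneg x -> nonneg (vv x i).
Proof.
  intros Hx j. unfold vv, restrict.
  destruct (excluded_middle_informative (inI Ii i j)). 2: lra.
  apply gam_nonneg; auto.
Qed.

Lemma vv_supp x i j : ~ In j (Ii i) -> vv x i j = 0.
Proof.
  intros H. unfold vv, restrict.
  destruct (excluded_middle_informative (inI Ii i j)); [contradiction|auto].
Qed.

Lemma vv_linfp x i : nonneg x -> linfp (vv x i).
Proof.
  intros Hx. split. apply vv_nonneg; auto.
  exists (fold_right (fun j acc => gam i j (x j) + acc) 0 (Ii i)).
  intros j. pose proof (vv_nonneg x i Hx j) as Hn. rewrite Rabs_right by lra.
  assert (Hf : forall k, In k (Ii i) -> 0 <= gam i k (x k)) by (intros; apply gam_nonneg; auto).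
  unfold vv, restrict in *. destruct (excluded_middle_informative (inI Ii i j)).
  - apply (fold_sum_ge (Ii i) (fun j => gam i j (x j))); auto.
  - apply (fold_sum_nonneg (Ii i) (fun j => gam i j (x j))); auto.
Qed.

Lemma mu_vv_fin x i : nonneg x -> is_finite (mu i (vv x i)).
Proof.
  intros Hx. destruct Hgain as [_ [_ [_ [_ [_ [_ [H3 _]]]]]]].
  apply (H3 i (Ii i) (vv x i) (vv_linfp x i Hx)). apply vv_supp.
Qed.

Lemma Gamma_nonneg x : nonneg x -> nonneg (Gamma Ii gam mu x).
Proof.
  intros Hx i. unfold Gamma. fold (vv x i).
  pose proof (mu_vv_fin x i Hx) as Hf.
  destruct Hgain as [_ [_ [_ [H0 _]]]].
  pose proof (H0 i _ (vv_linfp x i Hx)) as H. rewrite <- Hf in H. exact H.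
Qed.

Lemma Gamma_mono x y : nonneg x -> vle x y -> vle (Gamma Ii gam mu x) (Gamma Ii gam mu y).
Proof.
  intros Hx Hxy i. unfold Gamma. fold (vv x i). fold (vv y i).
  assert (Hy : nonneg y) by (intros j; specialize (Hx j); specialize (Hxy j); lra).
  pose proof (mu_vv_fin x i Hx) as Hfx. pose proof (mu_vv_fin y i Hy) as Hfy.
  destruct Hgain as [_ [_ [_ [_ [_ [H2 _]]]]]].
  assert (Hv : vle (vv x i) (vv y i)).
  { intros j. unfold vv, restrict. destruct (excluded_middle_informative (inI Ii i j)). 2: lra.
    apply gam_mono; auto. }
  pose proof (H2 i _ _ (vv_linfp x i Hx) (vv_linfp y i Hy) Hv) as H.
  rewrite <- Hfx, <- Hfy in H. exact H.
Qed.

Lemma gam_unif_bound R0 : 0 <= R0 -> exists C, forall i j, In j (Ii i) ->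
  forall r, 0 <= r <= R0 -> gam i j r <= C.
Proof.
  intros HR0.
  destruct Hgain as [_ [HK [Heq _]]].
  assert (Hd : forall t, exists d : posreal, 0 <= t -> forall i j, In j (Ii i) ->
     forall r', 0 <= r' -> Rabs (r' - t) < 2 * d -> Rabs (gam i j r' - gam i j t) < 1).
  { intros t. destruct (Rle_dec 0 t) as [Ht|Ht].
    - destruct (Heq t Ht 1 Rlt_0_1) as [d [Hd0 Hd]].
      assert (Hp : 0 < d / 2) by lra.
      exists (mkposreal _ Hp). intros _ i j Hij r' Hr' Hrt. simpl in Hrt.
      apply Hd; auto. lra.
    - exists (mkposreal _ Rlt_0_1). intros; contradiction. }
  set (delta := fun t => proj1_sig (constructive_indefinite_description _ (Hd t))).
  assert (Hdelta : forall t, 0 <= t -> forall i j, In j (Ii i) ->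
     forall r', 0 <= r' -> Rabs (r' - t) < 2 * delta t -> Rabs (gam i j r' - gam i j t) < 1).
  { intros t. unfold delta. destruct (constructive_indefinite_description _ (Hd t)) as [dd Hdd].
    simpl. exact Hdd. }
  destruct (compactness_value_1d 0 R0 delta) as [d Hcomp].
  assert (Huc : forall i j, In j (Ii i) -> forall x y, 0 <= x <= R0 -> 0 <= y <= R0 ->
     Rabs (x - y) < d -> gam i j x <= gam i j y + 2).
  { intros i j Hij x y Hx Hy Hxy.
    apply NNPP. intros Hn. apply (Hcomp x Hx). intros [t [Ht [Hxt Hdt]]].
    apply Hn.
    assert (H1 : Rabs (gam i j x - gam i j t) < 1).
    { apply Hdelta; auto; try lra. pose proof (cond_pos (delta t)). lra. }
    assert (H2 : Rabs (gam i j y - gam i j t) < 1).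
    { apply Hdelta; auto; try lra.
      assert (Rabs (y - t) <= Rabs (y - x) + Rabs (x - t)).
      { replace (y - t) with ((y - x) + (x - t)) by ring. apply Rabs_triang. }
      rewrite Rabs_minus_sym in Hxy. lra. }
    apply Rabs_def2 in H1. apply Rabs_def2 in H2. lra. }
  pose proof (cond_pos d) as Hdpos.
  assert (Hind : forall k : nat, forall i j, In j (Ii i) -> forall x, 0 <= x <= R0 ->
     x <= INR k * (d / 2) -> gam i j x <= 2 * (INR k + 1)).
  { induction k as [|k IH]; intros i j Hij x Hx Hxk.
    - simpl in Hxk. assert (x = 0) by lra. subst x.
      destruct (HK i j Hij) as [H0 _]. rewrite H0. simpl. lra.
    - rewrite S_INR in *. pose proof (pos_INR k).
      destruct (Rle_dec x (INR k * (d / 2))) as [Hle|Hgt].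
      + specialize (IH i j Hij x Hx Hle). lra.
      + assert (Hy : 0 <= INR k * (d / 2) <= R0).
        { split. apply Rmult_le_pos; lra. lra. }
        specialize (IH i j Hij _ Hy (Rle_refl _)).
        assert (gam i j x <= gam i j (INR k * (d / 2)) + 2).
        { apply Huc; auto. rewrite Rabs_right; lra. }
        lra. }
  destruct (INR_unbounded (R0 / (d / 2))) as [k Hk].
  exists (2 * (INR k + 1)). intros i j Hij r Hr. apply (Hind k); auto.
  assert (Hq : R0 = (R0 / (d / 2)) * (d / 2)) by (field; lra).
  apply Rmult_gt_compat_r with (r := d / 2) in Hk; [|lra]. lra.
Qed.

Definition cst (c : R) : I -> R := fun _ => c.

Lemma cst_linfp c : 0 <= c -> linfp (I:=I) (cst c).
Proof.
  intros Hc. split. intros; unfold cst; auto. exists c. intros j. unfold cst.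
  rewrite Rabs_right; lra.
Qed.

Lemma restrict_linfp (J : I -> Prop) (s : I -> R) : linfp s -> linfp (restrict J s).
Proof.
  intros [Hn [M HM]]. split.
  - intros j. unfold restrict. destruct (excluded_middle_informative (J j)); auto. lra.
  - exists M. intros j. unfold restrict. destruct (excluded_middle_informative (J j)); auto.
    rewrite Rabs_R0. specialize (HM j). pose proof (Rabs_pos (s j)). lra.
Qed.

Lemma mu_cst_bound C : 0 <= C -> exists B, forall i c, 0 <= c <= C ->
  real (mu i (restrict (inI Ii i) (cst c))) <= B.
Proof.
  intros HC.
  destruct Hgain as [_ [_ [_ [_ [[xi [_ Hxi]] [_ [_ H4]]]]]]].
  set (A := fun s : I -> R => exists c, 0 <= c <= C /\ s = cst c).
  assert (HA1 : forall s, A s -> linfp s).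
  { intros s [c [Hc ->]]. apply cst_linfp; lra. }
  assert (HA2 : exists M, forall s, A s -> norm_le s M).
  { exists C. intros s [c [Hc ->]] j. unfold cst. rewrite Rabs_right; lra. }
  destruct (H4 A HA1 HA2 1 Rlt_0_1) as [dl [Hdl Hm]].
  assert (Hind : forall k : nat, forall i c, 0 <= c <= C -> c <= INR k * dl ->
     real (mu i (restrict (inI Ii i) (cst c))) <= INR k).
  { induction k as [|k IH]; intros i c Hc Hck.
    - simpl in Hck. assert (c = 0) by lra. subst c.
      assert (restrict (inI Ii i) (cst 0) = fun _ => 0).
      { apply functional_extensionality. intros j. unfold restrict, cst.
        destruct (excluded_middle_informative _); auto. }
      rewrite H. destruct (Hxi i) as [-> _]. simpl. lra.
    - rewrite S_INR in *. pose proof (pos_INR k).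
      destruct (Rle_dec c (INR k * dl)) as [Hle|Hgt].
      + specialize (IH i c Hc Hle). lra.
      + set (c' := Rmax 0 (c - dl)).
        assert (Hc' : 0 <= c' <= C).
        { unfold c'. split. apply Rmax_l. apply Rmax_lub; lra. }
        assert (Hc'k : c' <= INR k * dl).
        { unfold c'. apply Rmax_lub. apply Rmult_le_pos; lra. lra. }
        specialize (IH i c' Hc' Hc'k).
        assert (HA : A (cst c')) by (exists c'; auto).
        assert (Hnl : norm_le (fun j => cst c j - cst c' j) dl).
        { intros j. unfold cst, c'. unfold Rmax. destruct (Rle_dec 0 (c - dl));
          rewrite Rabs_right; lra. }
        specialize (Hm _ _ HA (cst_linfp c ltac:(lra)) Hnl i).
        apply Rabs_le_between in Hm. lra. }
  destruct (INR_unbounded (C / dl)) as [k Hk].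
  exists (INR k). intros i c Hc. apply Hind; auto.
  assert (Hq : C = (C / dl) * dl) by (field; lra).
  apply Rmult_gt_compat_r with (r := dl) in Hk; [|lra]. lra.
Qed.

Lemma Gamma_linfp x : linfp x -> linfp (Gamma Ii gam mu x).
Proof.
  intros [Hx [M HM]].
  assert (Hxn : nonneg x) by exact Hx.
  destruct (gam_unif_bound (Rmax 0 M) (Rmax_l _ _)) as [C HC].
  set (C' := Rmax 0 C).
  destruct (mu_cst_bound C' (Rmax_l _ _)) as [B HB].
  split. apply Gamma_nonneg; auto.
  exists B. intros i. pose proof (Gamma_nonneg x Hxn i) as Hg.
  rewrite Rabs_right by lra.
  eapply Rle_trans; [|apply (HB i C'); split; [apply Rmax_l|lra]].
  unfold Gamma. fold (vv x i).
  assert (HL : linfp (restrict (inI Ii i) (cst C'))).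
  { apply restrict_linfp, cst_linfp, Rmax_l. }
  pose proof (mu_vv_fin x i Hxn) as Hf1.
  destruct Hgain as [_ [_ [_ [_ [_ [H2 [H3 _]]]]]]].
  assert (Hf2 : is_finite (mu i (restrict (inI Ii i) (cst C')))).
  { apply (H3 i (Ii i)); auto. intros j Hj. unfold restrict.
    destruct (excluded_middle_informative _); [contradiction|auto]. }
  assert (Hv : vle (vv x i) (restrict (inI Ii i) (cst C'))).
  { intros j. unfold vv, restrict, cst. destruct (excluded_middle_informative _). 2: lra.
    eapply Rle_trans; [|apply Rmax_r]. apply (HC i j); auto. split; auto.
    specialize (HM j). rewrite Rabs_right in HM by (apply Rle_ge; auto).
    eapply Rle_trans; [exact HM|apply Rmax_r]. }
  pose proof (H2 i _ _ (vv_linfp x i Hxn) HL Hv) as H.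
  rewrite <- Hf1, <- Hf2 in H. exact H.
Qed.

Lemma list_N (L : list I) (P : I -> nat -> Prop) :
  (forall j, In j L -> exists N, forall n, (N <= n)%nat -> P j n) ->
  exists N, forall j, In j L -> forall n, (N <= n)%nat -> P j n.
Proof.
  induction L as [|a L IH]; intros H.
  - exists O. intros j [].
  - destruct (H a (or_introl eq_refl)) as [Na HNa].
    destruct IH as [NL HNL]. { intros j Hj. apply H. simpl; auto. }
    exists (Nat.max Na NL). intros j [<-|Hj] n Hn.
    + apply HNa. lia.
    + apply HNL; auto. lia.
Qed.

Lemma sup_psi (x : nat -> I -> R) M :
  (forall n, nonneg (x n)) -> (forall n, vle (x n) (x (S n))) ->
  (forall n i, x n i <= M) -> (forall n, vle (Gamma Ii gam mu (x n)) (x (S n))) ->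
  exists sh, Psi (Gamma Ii gam mu) sh /\ vle (x O) sh.
Proof.
  intros Hnn Hinc HM HG.
  assert (Hmono : forall n m, (n <= m)%nat -> vle (x n) (x m)).
  { intros n m Hnm. induction Hnm. intros i; lra.
    intros i. specialize (IHHnm i). specialize (Hinc m i). lra. }
  set (E := fun i r => exists n, r = x n i).
  assert (Hb : forall i, bound (E i)).
  { intros i. exists M. intros r [n ->]. auto. }
  assert (He : forall i, exists r, E i r) by (intros i; exists (x O i), O; auto).
  set (sh := fun i => proj1_sig (completeness (E i) (Hb i) (He i))).
  assert (Hsh : forall i, is_lub (E i) (sh i)).
  { intros i. unfold sh. destruct (completeness (E i) (Hb i) (He i)); auto. }
  assert (Hub : forall n i, x n i <= sh i).
  { intros n i. apply (proj1 (Hsh i)). exists n; auto. }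
  assert (HleM : forall i, sh i <= M).
  { intros i. apply (proj2 (Hsh i)). intros r [n ->]. auto. }
  assert (Happ : forall i eps, 0 < eps -> exists N, sh i - eps < x N i).
  { intros i eps Heps. apply NNPP. intros Hn.
    assert (sh i <= sh i - eps). 2: lra.
    apply (proj2 (Hsh i)). intros r [n ->]. apply Rnot_lt_le. intros Hlt.
    apply Hn. exists n. auto. }
  assert (Hshn : nonneg sh).
  { intros i. specialize (Hnn O i). specialize (Hub O i). lra. }
  exists sh. split; [split|].
  - split; auto. exists M. intros i. rewrite Rabs_right. auto. apply Rle_ge; auto.
  - intros i. apply le_epsilon. intros eps Heps.
    destruct Hgain as [_ [HK [_ [_ [_ [_ [H3 _]]]]]]].
    destruct (H3 i (Ii i) (vv sh i) (vv_linfp sh i Hshn) (vv_supp sh i)) as [Hfin Hc].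
    destruct (Hc eps Heps) as [d [Hd Hcd]].
    destruct (list_N (Ii i) (fun j n => Rabs (gam i j (x n j) - gam i j (sh j)) < d)) as [N HN].
    { intros j Hj. destruct (HK i j Hj) as [_ [_ [Hct _]]].
      destruct (Hct (sh j) (Hshn j) d Hd) as [dl [Hdl Hdlc]].
      destruct (Happ j dl Hdl) as [N HN]. exists N. intros n Hn.
      apply Hdlc. apply Hnn. specialize (Hmono _ _ Hn j). specialize (Hub n j).
      rewrite Rabs_left1; lra. }
    assert (Hnorm : norm_le (fun j => vv (x N) i j - vv sh i j) d).
    { intros j. unfold vv, restrict. destruct (excluded_middle_informative (inI Ii i j)).
      - left. apply HN; auto.
      - rewrite Rminus_0_r, Rabs_R0. lra. }
    specialize (Hcd (vv (x N) i) (vv_linfp (x N) i (Hnn N)) (vv_supp (x N) i) Hnorm).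
    apply Rabs_le_between in Hcd.
    specialize (HG N i). specialize (Hub (S N) i). unfold Gamma in *.
    fold (vv (x N) i) in HG. fold (vv sh i). lra.
  - intros i. auto.
Qed.

End Aux.

Section Main.
Context {I : Type} (Ii : I -> list I) (gam : I -> I -> R -> R) (mu : I -> (I -> R) -> Rbar).
Hypothesis Hgain : gain_operator Ii gam mu.
Notation G := (Gamma Ii gam mu).

Lemma vmax_le (a b c : I -> R) : vle a c -> vle b c -> vle (vmax a b) c.
Proof. intros H1 H2 i. unfold vmax. apply Rmax_lub; auto. Qed.

Lemma bound_of_le (x sh : I -> R) : nonneg x -> linfp sh -> vle x sh -> exists M, norm_le x M /\ forall i, x i <= M.
Proof.
  intros Hx [_ [M HM]] Hle. exists M. split; intros i; [rewrite Rabs_right by (apply Rle_ge; auto)|];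
  specialize (HM i); specialize (Hle i); pose proof (Rle_abs (sh i)); lra.
Qed.

Lemma a_b : cofinal (Psi G) -> forall b, linfp b -> all_traj_bounded (fun s => vmax b (G s)).
Proof.
  intros Ha b Hb s Hs.
  assert (Hbs : linfp (vmax b s)).
  { destruct Hb as [Hb1 [M1 HM1]], Hs as [Hs1 [M2 HM2]]. split.
    - intros i. unfold vmax. eapply Rle_trans; [apply Hb1|apply Rmax_l].
    - exists (Rmax M1 M2). intros i. unfold vmax. specialize (HM1 i). specialize (HM2 i).
      pose proof (Rmax_l M1 M2). pose proof (Rmax_r M1 M2).
      unfold Rmax at 1. destruct (Rle_dec (b i) (s i)); lra. }
  destruct (Ha _ Hbs) as [sh [[Hsh HG] Hle]].
  assert (Hi : forall n, nonneg (Nat.iter n (fun s => vmax b (G s)) s) /\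
                         vle (Nat.iter n (fun s => vmax b (G s)) s) sh).
  { induction n as [|n [IH1 IH2]]; simpl.
    - split. exact (proj1 Hs). intros i. specialize (Hle i). unfold vmax in Hle.
      pose proof (Rmax_r (b i) (s i)). lra.
    - split.
      + intros i. unfold vmax. eapply Rle_trans; [apply (proj1 Hb)|apply Rmax_l].
      + apply vmax_le.
        * intros i. specialize (Hle i). unfold vmax in Hle. pose proof (Rmax_l (b i) (s i)). lra.
        * intros i. specialize (HG i). pose proof (Gamma_mono Ii gam mu Hgain _ _ IH1 IH2 i). lra. }
  destruct Hsh as [_ [M HM]]. exists M. intros n i. destruct (Hi n) as [H1 H2].
  specialize (H1 i). specialize (H2 i). specialize (HM i). pose proof (Rle_abs (sh i)).
  rewrite Rabs_right by lra. lra.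
Qed.

Lemma a_c : cofinal (Psi G) -> all_traj_bounded (fun s => vmax s (G s)).
Proof.
  intros Ha s Hs.
  destruct (Ha _ Hs) as [sh [[Hsh HG] Hle]].
  assert (Hi : forall n, nonneg (Nat.iter n (fun s => vmax s (G s)) s) /\
                         vle (Nat.iter n (fun s => vmax s (G s)) s) sh).
  { induction n as [|n [IH1 IH2]]; simpl.
    - split. exact (proj1 Hs). auto.
    - split.
      + intros i. unfold vmax. eapply Rle_trans; [apply IH1|apply Rmax_l].
      + apply vmax_le; auto.
        intros i. specialize (HG i). pose proof (Gamma_mono Ii gam mu Hgain _ _ IH1 IH2 i). lra. }
  destruct Hsh as [_ [M HM]]. exists M. intros n i. destruct (Hi n) as [H1 H2].
  specialize (H1 i). specialize (H2 i). specialize (HM i). pose proof (Rle_abs (sh i)).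
  rewrite Rabs_right by lra. lra.
Qed.

Lemma a_d : cofinal (Psi G) -> (forall s, linfp s -> exists sh (n : nat), linfp sh /\ (1 <= n)%nat /\
        (forall l : nat, (l < n)%nat -> vle s (Nat.iter l G sh)) /\
        vle (Nat.iter n G sh) sh).
Proof.
  intros Ha s Hs. destruct (Ha _ Hs) as [sh [[Hsh HG] Hle]].
  exists sh, 1%nat. split; auto. split; auto. split; auto.
  intros l Hl. assert (l = O) by lia. subst. auto.
Qed.

Lemma trajs_facts (s : I -> R) : nonneg s ->
  let x := fun n => Nat.iter n (fun t => vmax s (G t)) s in
  (forall n, nonneg (x n)) /\ (forall n, vle (x n) (x (S n))) /\
  (forall n, vle (G (x n)) (x (S n))).
Proof.
  intros Hs x.
  assert (Hnn : forall n, nonneg (x n)).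
  { intros n i. destruct n; simpl. apply Hs. unfold vmax.
    eapply Rle_trans; [apply Hs|apply Rmax_l]. }
  split; auto. split.
  - intros n. induction n as [|n IH].
    + intros i. simpl. unfold vmax. apply Rmax_l.
    + intros i. change (x (S n) i) with (vmax s (G (x n)) i).
      change (x (S (S n)) i) with (vmax s (G (x (S n))) i). unfold vmax.
      apply Rle_max_compat_l. apply (Gamma_mono Ii gam mu Hgain); auto.
  - intros n i. change (x (S n) i) with (vmax s (G (x n)) i). unfold vmax. apply Rmax_r.
Qed.

Lemma b_a : (forall b, linfp b -> all_traj_bounded (fun s => vmax b (G s))) -> cofinal (Psi G).
Proof.
  intros Hb s Hs.
  destruct (trajs_facts s (proj1 Hs)) as [H1 [H2 H3]].
  destruct (Hb s Hs s Hs) as [M HM].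
  apply (sup_psi Ii gam mu Hgain (fun n => Nat.iter n (fun t => vmax s (G t)) s) M); auto.
  intros n i. specialize (HM n i). pose proof (Rle_abs (Nat.iter n (fun s0 => vmax s (G s0)) s i)). lra.
Qed.

Lemma c_a : all_traj_bounded (fun s => vmax s (G s)) -> cofinal (Psi G).
Proof.
  intros Hc s Hs.
  destruct (Hc s Hs) as [M HM].
  set (x := fun n => Nat.iter n (fun t => vmax t (G t)) s).
  assert (Hnn : forall n, nonneg (x n)).
  { induction n as [|n IH]; intros i. exact (proj1 Hs i).
    change (x (S n) i) with (vmax (x n) (G (x n)) i). unfold vmax.
    eapply Rle_trans; [apply IH|apply Rmax_l]. }
  apply (sup_psi Ii gam mu Hgain x M); auto.
  - intros n i. change (x (S n) i) with (vmax (x n) (G (x n)) i). unfold vmax. apply Rmax_l.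
  - intros n i. specialize (HM n i). pose proof (Rle_abs (x n i)). unfold x in *. lra.
  - intros n i. change (x (S n) i) with (vmax (x n) (G (x n)) i). unfold vmax. apply Rmax_r.
Qed.

Lemma d_a : (forall s, linfp s -> exists sh (n : nat), linfp sh /\ (1 <= n)%nat /\
        (forall l : nat, (l < n)%nat -> vle s (Nat.iter l G sh)) /\
        vle (Nat.iter n G sh) sh) -> cofinal (Psi G).
Proof.
  intros Hd s Hs.
  destruct (Hd s Hs) as [sh [n [Hsh [Hn [Hl Hnle]]]]].
  destruct (trajs_facts s (proj1 Hs)) as [H1 [H2 H3]].
  set (x := fun n => Nat.iter n (fun t => vmax s (G t)) s) in *.
  assert (Hlin : forall l, linfp (Nat.iter l G sh)).
  { induction l as [|l IH]; simpl; auto. apply (Gamma_linfp Ii gam mu Hgain); auto. }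
  assert (HB : forall m, exists M, forall l, (l < m)%nat -> forall i, Nat.iter l G sh i <= M).
  { induction m as [|m [M IH]].
    - exists 0. intros l Hl'. lia.
    - destruct (Hlin m) as [_ [Mm HMm]]. exists (Rmax M Mm). intros l Hl' i.
      destruct (Nat.eq_dec l m) as [->|Hne].
      + specialize (HMm i). pose proof (Rle_abs (Nat.iter m G sh i)). pose proof (Rmax_r M Mm). lra.
      + specialize (IH l ltac:(lia) i). pose proof (Rmax_l M Mm). lra. }
  destruct (HB n) as [M HM].
  assert (Hk : forall k, exists r, (r < n)%nat /\ vle (x k) (Nat.iter r G sh)).
  { induction k as [|k [r [Hr Hxr]]].
    - exists O. split. lia. apply Hl. lia.
    - assert (HG : vle (G (x k)) (Nat.iter (S r) G sh)).
      { exact (Gamma_mono Ii gam mu Hgain _ _ (H1 k) Hxr). }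
      destruct (Nat.eq_dec (S r) n) as [Heq|Hne].
      + exists O. split. lia. simpl. change (x (S k)) with (vmax s (G (x k))).
        apply vmax_le. apply (Hl O). lia.
        intros i. specialize (HG i). rewrite Heq in HG. specialize (Hnle i). lra.
      + exists (S r). split. lia. change (x (S k)) with (vmax s (G (x k))).
        apply vmax_le; auto. apply Hl. lia. }
  apply (sup_psi Ii gam mu Hgain x M); auto.
  intros k i. destruct (Hk k) as [r [Hr Hxr]]. specialize (Hxr i). specialize (HM r Hr i). lra.
Qed.

End Main.

Theorem proposition2p23 (I : Type) (HI : inhabited I)
  (Hcount : exists f : I -> nat, forall x y, f x = f y -> x = y)
  (Ii : I -> list I) (gam : I -> I -> R -> R) (mu : I -> (I -> R) -> Rbar)
  (Hgain : gain_operator Ii gam mu) :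
  (cofinal (Psi (Gamma Ii gam mu)) <->
     (forall b, linfp b -> all_traj_bounded (fun s => vmax b (Gamma Ii gam mu s)))) /\
  (cofinal (Psi (Gamma Ii gam mu)) <->
     all_traj_bounded (fun s => vmax s (Gamma Ii gam mu s))) /\
  (cofinal (Psi (Gamma Ii gam mu)) <->
     (forall s, linfp s -> exists sh (n : nat), linfp sh /\ (1 <= n)%nat /\
        (forall l : nat, (l < n)%nat -> vle s (Nat.iter l (Gamma Ii gam mu) sh)) /\
        vle (Nat.iter n (Gamma Ii gam mu) sh) sh)).
Proof.
  split; [|split]; split.
  - apply a_b; auto.
  - apply b_a; auto.
  - apply a_c; auto.
  - apply c_a; auto.
  - apply a_d; auto.
  - apply d_a; auto.
Qed.
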